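(* Let $\star$ be a $t$-definer, let $n\ge 1$ and let $(X_1,d_1^\star),\dots,(X_n,d_n^\star)$ be nonempty $\star$-metric spaces, and let $X=\prod_{i=1}^n X_i$. For $x=(x_i)_{i=1}^n$, $y=(y_i)_{i=1}^n\in X$ define $d_T^\star(x,y)=d_1^\star(x_1,y_1)\star d_2^\star(x_2,y_2)\star\cdots\star d_n^\star(x_n,y_n)$ and $d_{\max}^\star(x,y)=\max_{1\le i\le n}d_i^\star(x_i,y_i)$. Then: (1) $(X,d_T^\star)$ is totally bounded if and only if every $(X_i,d_i^\star)$ is totally bounded; (2) $(X,d_{\max}^\star)$ is totally bounded if and only if every $(X_i,d_i^\star)$ is totally bounded.
   Context: A $t$-definer is a function $\star:[0,\infty)\times[0,\infty)\to[0,\infty)$ such that for all $a,b,c\ge 0$: $a\star b=b\star a$; $a\star(b\star c)=(a\star b)\star c$; if $a\le b$ then $a\star c\le b\star c$; $a\star 0=a$; and $\star$ is continuous in its first variable with respect to the Euclidean topology. Given a nonempty set $Y$, a $\star$-metric on $Y$ is a function $\rho:Y\times Y\to[0,\infty)$ such that for all $x,y,z\in Y$: $\rho(x,y)=0$ iff $x=y$; $\rho(x,y)=\rho(y,x)$; and $\rho(x,y)\le \rho(x,z)\star \rho(z,y)$; $(Y,\rho)$ is a $\star$-metric space. Both $d_T^\star$ and $d_{\max}^\star$ are $\star$-metrics on $X$ (with the same $t$-definer $\star$). A $\star$-metric space $(Y,\rho)$ is totally bounded if for every $\epsilon>0$ there is a finite set $F\subseteq Y$ with $Y=\bigcup_{x\in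 F}\{y\in Y:\rho(x,y)<\epsilon\}$. *)

(* Defs.v *)
From mathcomp Require Import all_boot all_order all_algebra.
From mathcomp Require Import reals.
From Stdlib Require List.
Set Implicit Arguments. Unset Strict Implicit. Unset Printing Implicit Defensive.
Import Order.TTheory GRing.Theory Num.Theory.
Local Open Scope ring_scope.

(* A t-definer: a binary operation on [0,oo), represented as a function
   R -> R -> R whose values off [0,oo) are irrelevant. *)
Definition t_definer (R : realType) (star : R -> R -> R) : Prop :=
  (forall a b, 0 <= a -> 0 <= b -> 0 <= star a b) /\
  (forall a b, 0 <= a -> 0 <= b -> star a b = star b a) /\
  (forall a b c, 0 <= a -> 0 <= b -> 0 <= c ->
      star a (star b c) = star (star a b) c) /\
  (forall a b c, 0 <= a -> 0 <= b -> 0 <= c -> a <= b -> star a c <= star b c) /\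
  (forall a, 0 <= a -> star a 0 = a) /\
  (forall b a, 0 <= b -> 0 <= a -> forall eps : R, 0 < eps ->
     exists2 delta : R, 0 < delta &
       forall a', 0 <= a' -> `|a' - a| < delta -> `|star a' b - star a b| < eps).

Definition star_metric (R : realType) (star : R -> R -> R) (Y : Type)
  (rho : Y -> Y -> R) : Prop :=
  (forall x y, 0 <= rho x y) /\
  (forall x y, rho x y = 0 <-> x = y) /\
  (forall x y, rho x y = rho y x) /\
  (forall x y z, rho x y <= star (rho x z) (rho z y)).

Definition totally_bounded (R : realType) (Y : Type) (rho : Y -> Y -> R) : Prop :=
  forall eps : R, 0 < eps ->
    exists F : seq Y, forall y : Y, exists2 x, List.In x F & rho x y < eps.

(* d_T(x,y) = d_1(x_1,y_1) * (d_2(x_2,y_2) * ( ... * (d_n(x_n,y_n) * 0)))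
   which equals d_1 * ... * d_n since a * 0 = a. *)
Definition dT (R : realType) (star : R -> R -> R) (n : nat) (X : 'I_n -> Type)
  (d : forall i, X i -> X i -> R) (x y : forall i, X i) : R :=
  \big[star/0]_(i < n) d i (x i) (y i).

(* d_max(x,y) = max_i d_i(x_i,y_i) (the 0 seed is harmless: distances are >= 0). *)
Definition dmax (R : realType) (n : nat) (X : 'I_n -> Type)
  (d : forall i, X i -> X i -> R) (x y : forall i, X i) : R :=
  \big[Num.max/0]_(i < n) d i (x i) (y i).

(* Main.v *)
Require Import Defs.
From mathcomp Require Import all_boot all_order all_algebra.
From mathcomp Require Import reals.
From Stdlib Require List ClassicalEpsilon.
Set Implicit Arguments. Unset Strict Implicit. Unset Printing Implicit Defensive.
Import Order.TTheory GRing.Theory Num.Theory.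
Local Open Scope ring_scope.

Section Aux.
Variable R : realType.

Lemma big_nonneg (op : R -> R -> R) (I : Type) (r : seq I) (F : I -> R) :
  (forall a b, 0 <= a -> 0 <= b -> 0 <= op a b) ->
  (forall i, 0 <= F i) -> 0 <= \big[op/0]_(i <- r) F i.
Proof.
move=> hop hF; elim: r => [|j r IH]; first by rewrite big_nil.
by rewrite big_cons; apply: hop.
Qed.

Lemma big_ge (op : R -> R -> R) (I : eqType) (r : seq I) (F : I -> R) i :
  (forall a b, 0 <= a -> 0 <= b -> 0 <= op a b) ->
  (forall a b, 0 <= a -> 0 <= b -> a <= op a b) ->
  (forall a b, 0 <= a -> 0 <= b -> b <= op a b) ->
  (forall i, 0 <= F i) -> i \in r -> F i <= \big[op/0]_(j <- r) F j.
Proof.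
move=> hop hl hr hF; elim: r => [|j r IH] //; rewrite in_cons big_cons.
case/orP => [/eqP ->|hi]; first by apply: hl => //; exact: big_nonneg.
apply: le_trans (IH hi) _; apply: hr => //; exact: big_nonneg.
Qed.

Lemma big_small (op : R -> R -> R) (I : Type) (r : seq I) :
  (forall a b, 0 <= a -> 0 <= b -> 0 <= op a b) ->
  (forall eps, 0 < eps -> exists2 e1, 0 < e1 & exists2 e2, 0 < e2 &
     forall a b, 0 <= a -> 0 <= b -> a < e1 -> b < e2 -> op a b < eps) ->
  forall eps, 0 < eps -> exists2 delta, 0 < delta &
    forall F : I -> R, (forall i, 0 <= F i) -> (forall i, F i < delta) ->
      \big[op/0]_(i <- r) F i < eps.
Proof.
move=> hnn hop; elim: r => [|j r IH] eps heps.
  by exists 1 => // F _ _; rewrite big_nil.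
have [e1 he1 [e2 he2 H]] := hop eps heps.
have [d2 hd2 H2] := IH e2 he2.
exists (Num.min e1 d2); first by rewrite lt_min he1 hd2.
move=> F hF hlt; rewrite big_cons; apply: H => //.
- exact: big_nonneg.
- by have := hlt j; rewrite lt_min => /andP[].
- by apply: H2 => // i; have := hlt i; rewrite lt_min => /andP[].
Qed.

Lemma in_nth_ex (T : Type) (x0 x : T) (s : seq T) :
  List.In x s -> exists2 k, (k < size s)%N & nth x0 s k = x.
Proof.
elim: s => [|a s IH] //= [->|/IH [k hk hx]]; first by exists 0%N.
by exists k.+1.
Qed.

Lemma mem_In (T : eqType) (x : T) (s : seq T) : x \in s -> List.In x s.
Proof.
elim: s => [|a s IH] //; rewrite in_cons => /orP [/eqP ->|/IH]; [left|right] => //.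
Qed.

Lemma In_map' (T U : Type) (f : T -> U) x (s : seq T) :
  List.In x s -> List.In (f x) (map f s).
Proof. elim: s => [|a s IH] //= [->|/IH]; [left|right] => //. Qed.

Definition upd (n : nat) (X : 'I_n -> Type) (z : forall j, X j) (i : 'I_n) (yi : X i) :
  forall j, X j := fun j =>
  match i =P j with ReflectT e => eq_rect i X yi j e | ReflectF _ => z j end.

Lemma upd_i (n : nat) (X : 'I_n -> Type) (z : forall j, X j) (i : 'I_n) (yi : X i) :
  upd z yi i = yi.
Proof.
rewrite /upd; case: (i =P i) => [e|] //.
by rewrite (eq_irrelevance e erefl).
Qed.

Lemma generic_tb (op : R -> R -> R) (n : nat) (X : 'I_n -> Type)
  (d : forall i : 'I_n, X i -> X i -> R) :
  (forall a b, 0 <= a -> 0 <= b -> 0 <= op a b) ->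
  (forall a b, 0 <= a -> 0 <= b -> a <= op a b) ->
  (forall a b, 0 <= a -> 0 <= b -> b <= op a b) ->
  (forall eps, 0 < eps -> exists2 e1, 0 < e1 & exists2 e2, 0 < e2 &
     forall a b, 0 <= a -> 0 <= b -> a < e1 -> b < e2 -> op a b < eps) ->
  (forall i x y, 0 <= d i x y) ->
  (forall i, inhabited (X i)) ->
  (totally_bounded (fun x y : forall i, X i => \big[op/0]_(i < n) d i (x i) (y i))
    <-> forall i, totally_bounded (d i)).
Proof.
move=> hnn hl hr hsm hd0 hne.
have z : forall j, X j.
  move=> j; apply: (proj1_sig (ClassicalEpsilon.constructive_indefinite_description
     (fun _ : X j => True) _)).
  by case: (hne j) => x; exists x.
split.
  move=> H i eps heps; have [F HF] := H eps heps.
  exists (map (fun x => x i) F) => yi.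
  have [x hx hlt] := HF (upd z yi).
  exists (x i); first exact: (In_map' (fun x => x i)).
  apply: le_lt_trans hlt; rewrite -[X in d i _ X](upd_i z yi).
  apply: (big_ge (F := fun j => d j (x j) (upd z yi j))) => //.
  exact: mem_index_enum.
move=> H eps heps.
have [delta hdelta Hs] := big_small (index_enum 'I_n) hnn hsm heps.
pose G i := proj1_sig (ClassicalEpsilon.constructive_indefinite_description _ (H i delta hdelta)).
have HG : forall i y, exists2 x, List.In x (G i) & d i x y < delta.
  move=> i; exact: (proj2_sig (ClassicalEpsilon.constructive_indefinite_description _ (H i delta hdelta))).
pose T := {dffun forall i, 'I_(size (G i))}.
exists (map (fun k : T => fun i => nth (z i) (G i) (k i)) (enum T)) => y.
have E : forall i, exists k : 'I_(size (G i)), d i (nth (z i) (G i) k) (y i) < delta.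
  move=> i; have [x hx hlt] := HG i (y i).
  have [k hk hkx] := in_nth_ex (z i) hx.
  by exists (Ordinal hk); rewrite /= hkx.
pose kf : T := finfun (fun i => proj1_sig (ClassicalEpsilon.constructive_indefinite_description _ (E i))).
exists (fun i => nth (z i) (G i) (kf i)).
  apply: (In_map' (fun k : T => fun i => nth (z i) (G i) (k i))).
  by apply: mem_In; rewrite mem_enum.
apply: (Hs (fun i => d i (nth (z i) (G i) (kf i)) (y i))) => // i.
rewrite ffunE.
exact: (proj2_sig (ClassicalEpsilon.constructive_indefinite_description _ (E i))).
Qed.

End Aux.

Theorem theorem3p7 (R : realType) (star : R -> R -> R) (hstar : t_definer star)
  (n : nat) (hn : (0 < n)%N) (X : 'I_n -> Type)
  (d : forall i : 'I_n, X i -> X i -> R)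
  (hd : forall i, star_metric star (d i))
  (hne : forall i, inhabited (X i)) :
  (totally_bounded (dT star d) <-> forall i, totally_bounded (d i)) /\
  (totally_bounded (dmax d) <-> forall i, totally_bounded (d i)).
Proof.
have [hnn [hcom [hass [hmono [h0 hcont]]]]] := hstar.
have hd0 : forall i x y, 0 <= d i x y by move=> i x y; case: (hd i).
have hl : forall a b, 0 <= a -> 0 <= b -> a <= star a b.
  move=> a b ha hb; rewrite -{1}(h0 a ha) hcom // (hcom a) //.
  exact: hmono.
have hr : forall a b, 0 <= a -> 0 <= b -> b <= star a b.
  by move=> a b ha hb; rewrite hcom //; apply: hl.
split.
  apply: generic_tb => // eps heps.
  have he2 : 0 < eps / 2 by rewrite divr_gt0.
  have [e1 he1 H] := hcont (eps / 2) 0 (ltW he2) (lexx 0) (eps / 2) he2.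
  exists e1 => //; exists (eps / 2) => // a b ha hb ha1 hb2.
  have h1 : star a b <= star a (eps / 2).
    rewrite (hcom a b) // (hcom a (eps / 2)) ?(ltW he2) //.
    by apply: hmono; rewrite ?ha ?hb ?(ltW he2) ?(ltW hb2).
  apply: le_lt_trans h1 _.
  have := H a ha; rewrite subr0 ger0_norm // => /(_ ha1).
  rewrite (hcom 0 (eps / 2)) ?lexx ?(ltW he2) // h0 ?(ltW he2) //.
  rewrite ltr_norml => /andP[_]; rewrite ltrBlDr => h.
  by apply: lt_le_trans h _; rewrite -splitr.
apply: generic_tb => //.
- by move=> a b ha hb; rewrite le_max ha.
- by move=> a b ha hb; rewrite le_max lexx.
- by move=> a b ha hb; rewrite le_max lexx orbT.
- move=> eps heps; exists eps => //; exists eps => // a b _ _ ha hb.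
  by rewrite gt_max ha hb.
Qed.
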